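(* Let $m,n,\rho$ be fixed. Consider any $l$ with $0<l\le n$ and any pairs $(n_i,\rho_i)$, $0\le i\le l-1$, of integers with $0<n_i\le n$, $0\le\rho_i\le n_i$, $n_i+\rho_i\le m$ for all $i$, $\sum_{i=0}^{l-1}n_i=n$ and $\sum_{i=0}^{l-1}\rho_i=\rho$. Then $$K_{\mathrm R}(q^m,n,\rho)\le\min_{\{(n_i,\rho_i)\}}q^{\,m(n-\rho)-\sum_i\rho_i(n_i-\rho_i)},$$ the minimum being taken over all such families of pairs.
   Context: The rank $\mathrm{rk}(\mathbf x)$ of $\mathbf x\in\mathrm{GF}(q^m)^n$ is the maximum number of its coordinates linearly independent over $\mathrm{GF}(q)$, and $d_{\mathrm R}(\mathbf x,\mathbf y)=\mathrm{rk}(\mathbf x-\mathbf y)$. $K_{\mathrm R}(q^m,n,\rho)$ is the minimum cardinality of a code in $\mathrm{GF}(q^m)^n$ with rank covering radius $\rho$ (covering radius $=\max_{\mathbf x}\min_{\mathbf c\in C}d_{\mathrm R}(\mathbf x,\mathbf c)$). *)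

(* Defs.v *)
From HB Require Import structures.
From mathcomp Require Import all_boot all_order all_algebra all_field.
Set Implicit Arguments. Unset Strict Implicit. Unset Printing Implicit Defensive.
Import GRing.Theory.
Local Open Scope ring_scope.

Section RankMetric.
Variables (F : finFieldType) (L0 : fieldExtType F).
(* GF(q^m) viewed as a finite type, an extension of GF(q) = F *)
Local Notation L := (finvect_type L0).

Definition rk n (x : 'rV[L]_n) : nat :=
  \max_(S : {set 'I_n} | free [seq (x 0 i : L0) | i <- enum S]) #|S|.

Definition dR n (x y : 'rV[L]_n) : nat := rk (x - y).

Definition rcovers n (rho : nat) (C : {set 'rV[L]_n}) : bool :=
  [forall x : 'rV[L]_n, [exists c in C, (dR x c <= rho)%N]].

Definition KR n (rho : nat) : nat :=
  \big[minn/#|[set: 'rV[L]_n]|]_(C : {set 'rV[L]_n} | rcovers rho C) #|C|.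
End RankMetric.

(* Main.v *)
Require Import Defs.
From HB Require Import structures.
From mathcomp Require Import all_boot all_order all_algebra all_field.
From mathcomp Require Import zify.
From Stdlib Require Import Lia.
Set Implicit Arguments. Unset Strict Implicit. Unset Printing Implicit Defensive.
Import GRing.Theory.

Local Open Scope ring_scope.

Lemma ext_exists (F : finFieldType) (h : nat) : (0 < h)%N ->
  {E : splittingFieldType F | \dim {:E} = h}.
Proof.
move=> h_gt0.
pose q := #|F|.
have q_gt1 : (1 < q)%N by apply: finNzRing_gt1.
pose m := (q ^ h)%N.
have m_gt1: (m > 1)%N by rewrite /m (ltn_exp2l 0).
have m_gt0 := ltnW m_gt1; have m1_gt0: (m.-1 > 0)%N by rewrite -ltnS prednK.
pose P (R : nzRingType) := ('X^m - 'X : {poly R}).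
have DP R: P R = ('X^(m.-1) - 1) * ('X - 0).
  by rewrite subr0 mulrBl mul1r -exprSr prednK.
have /FinSplittingFieldFor[/= L splitLq]: P F != 0.
  by rewrite DP monic_neq0 ?rpredM ?monicXsubC ?monicXnsubC.
rewrite rmorphB rmorphXn /= map_polyX -/(P L) in splitLq.
exists L.
have [p pr_p pcharFp] := finPcharP F.
have pcharL: p \in [pchar L] by rewrite pchar_lalg.
pose Fm := FinFieldExtType L.
have /finField_galois_generator[/= a _ Da]: (1 <= {:L})%VS by apply: sub1v.
pose Em := fixedSpace (a ^+ h)%g; rewrite dimv1 expn1 in Da.
have{splitLq} [zs DqL defL] := splitLq.
have qR0 : (q%:R : L) = 0.
  have e_gt0 : (0 < logn p #|F|)%N.
    have cF : #|F| = (p ^ logn p #|F|)%N := card_pprimeChar pcharFp.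
    move: q_gt1; rewrite /q; set e := logn p #|F|; move: cF; rewrite -/e.
    by move=> ->; case: e.
  have cF : #|F| = (p ^ logn p #|F|)%N := card_pprimeChar pcharFp.
  move: e_gt0; set e := logn p #|F|; move: cF; rewrite -/e => cF e_gt0.
  by rewrite /q cF natrX (pcharf0 pcharL) expr0n gtn_eqF.
have Uzs: uniq zs.
  rewrite -separable_prod_XsubC -(eqp_separable DqL) DP separable_root andbC.
  rewrite /root !hornerE subr_eq0 eq_sym expr0n gtn_eqF ?oner_eq0 //=.
  rewrite cyclotomic.separable_Xn_sub_1 // -subn1 natrB // subr_eq0.
  by rewrite natrX qR0 expr0n gtn_eqF // eq_sym oner_eq0.
have cardFm : #|Fm| = m.
  suffices /eq_card->: Fm =i zs.
    apply: succn_inj; rewrite (card_uniqP _) //= -(size_prod_XsubC _ id).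
    by rewrite -(eqp_size DqL) size_polyDl size_polyXn // size_polyN size_polyX.
  have in_zs: zs =i Em.
    move=> z; rewrite -root_prod_XsubC -(eqp_root DqL) (sameP fixedSpaceP eqP).
    rewrite /root !hornerE subr_eq0 /= /m; congr (_ == z).
    elim: (h) => [|i IHi]; first by rewrite gal_id.
    by rewrite expgSr expnSr exprM IHi galM ?Da ?memvf.
  suffices defEm: Em = {:L}%VS by move=> z; rewrite in_zs defEm memvf.
  apply/eqP; rewrite eqEsubv subvf -defL -[Em]subfield_closed agenvS //.
  by rewrite subv_add sub1v; apply/span_subvP=> z; rewrite in_zs.
have := card_vspace (fullv : {vspace finvect_type L}).
rewrite card_vspacef => E.
have : (q ^ \dim {:L} = q ^ h)%N by rewrite -[LHS]E; exact: cardFm.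
by move/eqP; rewrite eqn_exp2l // => /eqP.
Qed.

Local Open Scope ring_scope.

Section Gab.
Variables (F : finFieldType) (E : fieldExtType F).

Lemma frob1B (x y : E) : (x - y) ^+ #|F| = x ^+ #|F| - y ^+ #|F|.
Proof.
have [p _ pcharFp] := finPcharP F.
have cF : #|F| = (p ^ logn p #|F|)%N := card_pprimeChar pcharFp.
rewrite cF; elim: (logn p #|F|) => [|n IHn].
  by rewrite expn0 !expr1.
rewrite expnSr.
rewrite !exprM {}IHn.
rewrite -(pchar_lalg E) in pcharFp.
by rewrite -!(pFrobenius_autE pcharFp) rmorphB.
Qed.

Lemma frob1Z (c : F) (x : E) : (c *: x) ^+ #|F| = c *: x ^+ #|F|.
Proof.
rewrite -[c *: x]mulr_algl exprMn.
have -> : (c%:A : E) ^+ #|F| = (c ^+ #|F|)%:A by rewrite -(rmorphXn (in_alg E)).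
by rewrite expf_card mulr_algl.
Qed.

Definition frob j (x : E) := x ^+ (#|F| ^ j).

Lemma frobB j (x y : E) : frob j (x - y) = frob j x - frob j y.
Proof.
rewrite /frob; elim: j => [|j IH]; first by rewrite expn0 !expr1.
by rewrite expnSr !exprM IH frob1B.
Qed.

Lemma frobZ j (c : F) (x : E) : frob j (c *: x) = c *: frob j x.
Proof.
rewrite /frob; elim: j => [|j IH]; first by rewrite expn0 !expr1.
by rewrite expnSr !exprM IH frob1Z.
Qed.

Lemma frob0 j : frob j 0 = 0.
Proof.
rewrite /frob expr0n; have : (0 < #|F| ^ j)%N by rewrite expn_gt0 (ltnW (finNzRing_gt1 F)).
by case: (#|F| ^ j)%N.
Qed.

Definition lp k (a : 'I_k -> E) (x : E) := \sum_(i < k) a i * frob i x.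

Lemma lpB k (a : 'I_k -> E) x y : lp a (x - y) = lp a x - lp a y.
Proof.
by rewrite /lp -sumrB; apply: eq_bigr => i _; rewrite frobB mulrBr.
Qed.

Lemma lpZ k (a : 'I_k -> E) (c : F) x : lp a (c *: x) = c *: lp a x.
Proof.
rewrite /lp scaler_sumr; apply: eq_bigr => i _; rewrite frobZ.
by rewrite scalerAr.
Qed.

Lemma lp0 k (a : 'I_k -> E) : lp a 0 = 0.
Proof. by have := lpB a 0 0; rewrite subrr => ->; rewrite subrr. Qed.

Lemma lpD k (a : 'I_k -> E) x y : lp a (x + y) = lp a x + lp a y.
Proof.
have lpN z : lp a (- z) = - lp a z by rewrite -sub0r lpB lp0 sub0r.
have -> : x + y = x - (- y) by rewrite opprK.
by rewrite lpB lpN opprK.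
Qed.

Lemma lp_sum k (a : 'I_k -> E) n (c : 'I_n -> F) (v : 'I_n -> E) :
  lp a (\sum_(i < n) c i *: v i) = \sum_(i < n) c i *: lp a (v i).
Proof.
apply: (big_rec2 (fun y1 y2 => lp a y1 = y2)); first exact: lp0.
by move=> i y1 y2 _ <-; rewrite lpD lpZ.
Qed.

Lemma lp_vanish k (a : 'I_k -> E) (Z : {vspace E}) : \dim Z = k ->
  (forall z, z \in Z -> lp a z = 0) -> forall i, a i = 0.
Proof.
move=> dZ Z0.
have q_gt1 : (1 < #|F|)%N := finNzRing_gt1 F.
pose P : {poly E} := \sum_(i < k) a i *: 'X^(#|F| ^ i).
have PE x : P.[x] = lp a x.
  rewrite /P horner_sum /lp; apply: eq_bigr => i _.
  by rewrite hornerZ hornerXn.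
suff P0 : P = 0.
  move=> i; have := congr1 (fun p : {poly E} => p`_(#|F| ^ i)) P0.
  rewrite /= coef0 /P coef_sum (bigD1 i) //= coefZ coefXn eqxx mulr1.
  rewrite big1 ?addr0 // => j ji; rewrite coefZ coefXn eqn_exp2l //.
  by case: eqP => [/val_inj ij|]; [rewrite ij eqxx in ji | rewrite mulr0].
pose rs := enum [pred z : finvect_type E | z \in Z].
apply: (@roots_geq_poly_eq0 _ P rs).
- apply/allP => z; rewrite /rs (@mem_enum (finvect_type E)) inE => zZ.
  by rewrite /root PE Z0.
- exact: enum_uniq.
have -> : size rs = (#|F| ^ k)%N.
  have -> : (#|F| ^ k)%N = (#|F| ^ \dim Z)%N by rewrite dZ.
  rewrite -(card_vspace (Z : {vspace finvect_type E})) /rs -cardE.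
  by apply: eq_card => z; rewrite !inE.
apply: leq_trans (size_sum _ _ _) _.
apply/bigmax_leqP => i _.
apply: leq_trans (size_scale_leq _ _) _.
by rewrite size_polyXn ltn_exp2l.
Qed.

Lemma lp_subl k (a b : 'I_k -> E) x : lp (fun i => a i - b i) x = lp a x - lp b x.
Proof. by rewrite /lp -sumrB; apply: eq_bigr => i _; rewrite mulrBl. Qed.

Lemma lp_interp k (z t : 'I_k -> E) : free (mktuple z) ->
  exists a : 'I_k -> E, forall j, lp a (z j) = t j.
Proof.
move=> fz.
pose T := {ffun 'I_k -> finvect_type E}.
pose Phi (a : T) : T := [ffun j => lp a (z j)].
have Phi_inj : injective Phi.
  move=> a b /ffunP eab; apply/ffunP => i; apply/eqP; rewrite -subr_eq0; apply/eqP.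
  pose d := fun i => (a i - b i : E).
  apply: (@lp_vanish k d <<mktuple z>>%VS).
  - by move/eqP: fz ->; rewrite size_tuple.
  - move=> v /coord_span ->; rewrite lp_sum big1 // => j _.
    rewrite /d lp_subl nth_mktuple.
    by have := eab j; rewrite !ffunE => ->; rewrite subrr scaler0.
have [g PhiK gK] := injF_bij Phi_inj.
exists (g [ffun j => t j]) => j.
by have := congr1 (fun f : T => f j) (gK [ffun j => t j]); rewrite /Phi !ffunE.
Qed.
End Gab.

Local Open Scope ring_scope.

Section Comb.
Variables (K : fieldType) (V : vectType K).

Definition comb n (y : 'I_n -> V) (u : 'rV[K]_n) : V := \sum_i u 0 i *: y i.

Lemma comb_lin n (y : 'I_n -> V) : linear (comb y).
Proof.
move=> a u v; rewrite /comb scaler_sumr -big_split; apply: eq_bigr => i _.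
by rewrite !mxE scalerDl scalerA.
Qed.

Definition combLin n (y : 'I_n -> V) : {linear 'rV[K]_n -> V} :=
  HB.pack (comb y) (GRing.isLinear.Build _ _ _ _ (comb y) (comb_lin y)).

Definition combL n (y : 'I_n -> V) : 'Hom('rV[K]_n, V) := linfun (combLin y).

Lemma combLE n (y : 'I_n -> V) u : combL y u = \sum_i u 0 i *: y i.
Proof. by rewrite /combL lfunE. Qed.

Definition spf n (y : 'I_n -> V) : {vspace V} := <<[seq y i | i <- enum 'I_n]>>%VS.

Lemma spf_limg n (y : 'I_n -> V) : (spf y <= limg (combL y))%VS.
Proof.
apply/span_subvP => v /mapP[i _ ->].
have -> : y i = combL y (delta_mx 0 i).
  rewrite combLE (bigD1 i) //= big1 ?addr0 => [|j ji]; first by rewrite mxE !eqxx scale1r.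
  by rewrite mxE (negbTE ji) andbF scale0r.
exact: memv_img (memvf _).
Qed.

Lemma limg_comb_sub n (y : 'I_n -> V) (U : {vspace V}) :
  (forall i, y i \in U) -> (limg (combL y) <= U)%VS.
Proof.
move=> yU; apply/subvP => v /memv_imgP[u _ ->]; rewrite combLE.
by apply: rpred_sum => i _; apply: rpredZ.
Qed.

Lemma dim_rV n : \dim {: 'rV[K]_n} = n.
Proof. by rewrite dimvf /dim /= mul1n. Qed.

Lemma rank_nullity (W : vectType K) (f : 'Hom(W, V)) :
  (\dim (lker f) + \dim (limg f) = \dim {:W})%N.
Proof. by rewrite -(limg_ker_dim f fullv) capfv. Qed.

Lemma inj_hom (U : vectType K) : (\dim {:U} <= \dim {:V})%N ->
  exists f : 'Hom(U, V), lker f == 0%VS.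
Proof.
move=> le_dim.
set X := vbasis {:U}; set Y := take (\dim {:U}) (vbasis {:V}).
have frX : free X := basis_free (vbasisP _).
have frY : free Y.
  have := basis_free (vbasisP {:V}); rewrite -(cat_take_drop (\dim {:U}) (vbasis {:V})).
  exact: catl_free.
have szY : size Y = size X by rewrite size_takel ?size_tuple.
have [f0 Df0] := linear_of_free X Y.
exists (linfun f0).
have dimg : \dim (limg (linfun f0)) = \dim {:U}.
  have -> : limg (linfun f0) = <<map (linfun f0) X>>%VS.
    by rewrite -limg_span (span_basis (vbasisP {:U})).
  rewrite (eq_map (lfunE f0)) Df0 //.
  by move/eqP: frY ->; rewrite szY size_tuple.
have := rank_nullity (linfun f0); rewrite dimg -{2}[\dim {:U}]add0n => /addIn.
by rewrite -dimv_eq0 => ->.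
Qed.


Lemma combLB n (y y' : 'I_n -> V) u :
  combL (fun i => y i - y' i) u = combL y u - combL y' u.
Proof.
by rewrite !combLE -sumrB; apply: eq_bigr => i _; rewrite scalerBr.
Qed.

End Comb.

Lemma combL_map (K : fieldType) (V W : vectType K) n (f : 'Hom(V, W))
  (y : 'I_n -> V) u : combL (fun i => f (y i)) u = f (combL y u).
Proof.
by rewrite !combLE linear_sum; apply: eq_bigr => i _; rewrite linearZ.
Qed.


Local Open Scope ring_scope.

Section Block.
Variables (F : finFieldType) (L0 : fieldExtType F).
Local Notation L := (finvect_type L0).
Local Notation m := (\dim {:L0}).

Definition rowf n (y : 'rV[L]_n) : 'I_n -> L0 := fun i => y 0 i.

Lemma dimL_gt0 : (0 < m)%N.
Proof.
rewrite lt0n dimv_eq0; apply/eqP => f0.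
have : (1 : L0) \in fullv by apply: memvf.
by rewrite f0 memv0 oner_eq0.
Qed.

Lemma block_code n r : (r <= n)%N -> (n + r <= m)%N ->
  exists C : {set 'rV[L]_n}, (#|C| <= #|F| ^ ((m - r) * (n - r)))%N /\
   forall x : 'rV[L]_n, exists2 c, c \in C &
     (\dim (spf (rowf (x - c)%R)) <= r)%N.
Proof.
move=> le_rn le_nrm.
set h := (m - r)%N; set k := (n - r)%N.
have le_nh : (n <= h)%N.
  rewrite /h leq_subRL; first by rewrite addnC.
  exact: leq_trans (leq_addl n r) le_nrm.
have h_gt0 : (0 < h)%N.
  have [n0|n_gt0] := posnP n; last exact: leq_trans n_gt0 le_nh.
  have r0 : r = 0%N by apply/eqP; rewrite -leqn0 -n0.
  by rewrite /h r0 subn0 dimL_gt0.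
have [E dE] := ext_exists F h_gt0.
have [G G0] : exists G : 'Hom('rV[F]_n, E), lker G == 0%VS.
  by apply: inj_hom; rewrite dim_rV dE.
have [phi phi0] : exists phi : 'Hom(E, L0), lker phi == 0%VS.
  by apply: inj_hom; rewrite dE leq_subr.
set psi := (phi^-1)%VF.
have psiK : cancel phi psi := lker0_lfunK phi0.
have dker_psi : \dim (lker psi) = r.
  have limg_psi : limg psi = fullv.
    apply/vspaceP => e; rewrite memvf; rewrite -[e]psiK.
    exact: memv_img (memvf _).
  have := rank_nullity psi; rewrite limg_psi dE /h.
  have : (r <= m)%N by apply: leq_trans (leq_addl n r) le_nrm.
  move=> Hr /(congr1 (subn^~ (\dim {:L0} - r)%N)); rewrite addnK subKn //.
pose code (a : {ffun 'I_k -> finvect_type E}) : 'rV[L]_n :=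
  \row_i (phi (lp a (G (delta_mx 0 i))) : L).
exists [set code a | a in {ffun 'I_k -> finvect_type E}].
split.
  apply: leq_trans (leq_imset_card _ _) _.
  have cE : #|finvect_type E| = (#|F| ^ h)%N.
    by rewrite -(card_vspacef (Vector.class (finvect_type E))) card_vspace dE.
  by rewrite card_ffun card_ord cE -expnM.
move=> x.
pose xf := rowf x.
pose w i : L0 := xf i - phi (psi (xf i)).
have wker i : w i \in lker psi by rewrite memv_ker /w linearB /= psiK subrr.
have dimg_w : (\dim (limg (combL w)) <= r)%N.
  by rewrite -dker_psi; apply: dimvS; apply: limg_comb_sub.
have dker_w : (k <= \dim (lker (combL w)))%N.
  have := rank_nullity (combL w); rewrite dim_rV.
  move: dimg_w; move: (\dim (lker (combL w))) (\dim (limg (combL w))) => d1 d2.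
  rewrite /k; lia.
set B := vbasis (lker (combL w)).
have szB : (k <= size B)%N by rewrite size_tuple.
pose Bk := take k B.
have frBk : free Bk.
  have := basis_free (vbasisP (lker (combL w))); rewrite -/B.
  rewrite -(cat_take_drop k B); exact: catl_free.
have szBk : size Bk = k by rewrite size_takel.
have Bker j : (j < k)%N -> B`_j \in lker (combL w).
  by move=> jk; apply: vbasis_mem; apply: mem_nth; apply: leq_trans jk szB.
pose z (j : 'I_k) : E := G (B`_j).
have frz : free (mktuple z).
  have -> : (mktuple z : seq E) = map G Bk.
    apply: (@eq_from_nth _ 0); first by rewrite size_tuple size_map szBk.
    move=> i; rewrite size_tuple => ik.
    rewrite (nth_map 0) ?szBk // nth_take //.
    by rewrite -[i]/(nat_of_ord (Ordinal ik)) nth_mktuple.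
  rewrite /free size_map -limg_span limg_dim_eq; first exact: frBk.
  by rewrite (eqP G0) capv0.
pose tt (j : 'I_k) : E := psi (combL xf (B`_j)).
have [a0 Ha0] := lp_interp tt frz.
pose a : {ffun 'I_k -> finvect_type E} := [ffun j => a0 j].
have lpa v : lp a v = lp a0 v by apply: eq_bigr => i _; rewrite ffunE.
exists (code a); first by apply: imset_f.
pose y := rowf (x - code a).
have combLy u : combL y u = combL xf u - phi (lp a (G u)).
  have Gu : G u = \sum_i u 0 i *: G (delta_mx 0 i).
    by rewrite {1}[u]row_sum_delta linear_sum; apply: eq_bigr => i _; rewrite linearZ.
  rewrite Gu lp_sum linear_sum !combLE -sumrB; apply: eq_bigr => i _.
  by rewrite /y /rowf !mxE linearZ /= scalerBr.
have key j : (j < k)%N -> combL y (B`_j) = 0.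
  move=> jk; rewrite combLy.
  have : combL w (B`_j) = 0 by apply/eqP; rewrite -memv_ker; exact: Bker.
  rewrite /w combLB.
  rewrite (combL_map phi (fun i => psi (xf i))) (combL_map psi xf).
  have -> : lp a (G B`_j) = tt (Ordinal jk) by rewrite lpa -Ha0.
  by [].
have sBk : (<<Bk>> <= lker (combL y))%VS.
  apply/span_subvP => v /(nthP 0)[j]; rewrite szBk => jk <-.
  by rewrite nth_take // memv_ker key.
have dker_y : (k <= \dim (lker (combL y)))%N.
  by rewrite -szBk -(eqP frBk); apply: dimvS.
apply: leq_trans (dimvS (spf_limg y)) _.
have := rank_nullity (combL y); rewrite dim_rV.
move: dker_y; move: (\dim (lker (combL y))) (\dim (limg (combL y))) => d1 d2.
rewrite /k; lia.
Qed.
End Block.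

Local Open Scope ring_scope.

Section Final.
Variables (F : finFieldType) (L0 : fieldExtType F).
Local Notation L := (finvect_type L0).
Local Notation m := (\dim {:L0}).

Lemma rk_spf n (y : 'rV[L]_n) : (rk y <= \dim (spf (rowf y)))%N.
Proof.
apply/bigmax_leqP => S frS.
rewrite cardE -(size_map (fun i => (y 0 i : L0))) -(eqP frS).
apply: dimvS; apply/span_subvP => v /mapP[i _ ->].
by apply: memv_span; apply: map_f; rewrite mem_enum.
Qed.

Lemma bigmin_leq (T : finType) (P : pred T) (f : T -> nat) d (t0 : T) :
  P t0 -> (\big[minn/d]_(t | P t) f t <= f t0)%N.
Proof.
move=> Pt0; have : t0 \in index_enum T by rewrite mem_index_enum.
elim: (index_enum T) => // t s IH; rewrite inE big_cons => /orP[/eqP <-|ts].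
  by rewrite Pt0 geq_minl.
by case: (P t); [apply: leq_trans (geq_minr _ _) (IH ts) | apply: IH].
Qed.

Definition covers n (C : {set 'rV[L]_n}) r :=
  forall x : 'rV[L]_n, exists2 c, c \in C & (\dim (spf (rowf (x - c)%R)) <= r)%N.

Lemma prod_code n1 n2 r1 r2 (C1 : {set 'rV[L]_n1}) (C2 : {set 'rV[L]_n2}) :
  covers C1 r1 -> covers C2 r2 ->
  exists C : {set 'rV[L]_(n1 + n2)}, (#|C| <= #|C1| * #|C2|)%N /\ covers C (r1 + r2).
Proof.
move=> cov1 cov2.
exists [set row_mx c1 c2 | c1 in C1, c2 in C2]; split.
  by rewrite curry_imset2X -cardsX; apply: leq_imset_card.
move=> x; have [c1 c1C d1] := cov1 (lsubmx x); have [c2 c2C d2] := cov2 (rsubmx x).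
exists (row_mx c1 c2); first by apply/imset2P; exists c1 c2.
have -> : (x - row_mx c1 c2 = row_mx (lsubmx x - c1) (rsubmx x - c2))%R.
  by rewrite -{1}(hsubmxK x) opp_row_mx add_row_mx.
set a := (lsubmx x - c1)%R; set b := (rsubmx x - c2)%R.
apply: leq_trans (_ : \dim (spf (rowf a) + spf (rowf b)) <= _)%N.
  apply: dimvS; apply/span_subvP => v /mapP[i _ ->]; rewrite /rowf.
  case: (splitP i) => j ij.
    have -> : i = lshift n2 j by apply: val_inj.
    rewrite row_mxEl.
    by apply: (subvP (addvSl _ _)); apply: memv_span; apply: map_f; rewrite mem_enum.
  have -> : i = rshift n1 j by apply: val_inj.
  rewrite row_mxEr.
  by apply: (subvP (addvSr _ _)); apply: memv_span; apply: map_f; rewrite mem_enum.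
apply: leq_trans (dimv_add_leqif _ _).1 _.
exact: leq_add.
Qed.


Lemma multi_code l (n_ r_ : 'I_l -> nat) :
  (forall i, r_ i <= n_ i)%N -> (forall i, n_ i + r_ i <= m)%N ->
  forall N, N = (\sum_(i < l) n_ i)%N ->
  exists C : {set 'rV[L]_N},
    (#|C| <= #|F| ^ (\sum_(i < l) (m - r_ i) * (n_ i - r_ i)))%N /\
    covers C (\sum_(i < l) r_ i)%N.
Proof.
elim: l n_ r_ => [|l IH] n_ r_ hr hm N.
  rewrite !big_ord0 => N0; subst N.
  exists [set 0%R]; split; first by rewrite cards1.
  move=> x; exists 0%R; first by rewrite inE.
  apply: leq_trans (dim_span _) _.
  by rewrite size_map size_enum_ord.
rewrite big_ord_recr /= => DN.
have [C1 [cC1 vC1]] := IH (fun i => n_ (widen_ord (leqnSn l) i))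
   (fun i => r_ (widen_ord (leqnSn l) i)) (fun i => hr _) (fun i => hm _) _ erefl.
have [C2 [cC2 vC2]] := block_code (hr ord_max) (hm ord_max).
have [C [cC vC]] := prod_code vC1 vC2.
subst N; exists C; split.
  rewrite big_ord_recr /= expnD; apply: leq_trans cC _.
  exact: leq_mul.
by rewrite big_ord_recr.
Qed.

End Final.

Local Close Scope ring_scope.

Lemma expo_eq l (n_ r_ : 'I_l -> nat) M :
  (forall i, r_ i <= n_ i) -> (forall i, r_ i <= M) ->
  \sum_(i < l) (M - r_ i) * (n_ i - r_ i) =
  M * (\sum_(i < l) n_ i - \sum_(i < l) r_ i) - \sum_(i < l) r_ i * (n_ i - r_ i).
Proof.
move=> hr hM.
have Hd : \sum_(i < l) (n_ i - r_ i) = \sum_(i < l) n_ i - \sum_(i < l) r_ i.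
  apply/eqP; rewrite -(eqn_add2r (\sum_(i < l) r_ i)) subnK; last first.
    by apply: leq_sum => i _; apply: hr.
  by rewrite -big_split /=; apply/eqP/eq_bigr => i _; rewrite subnK.
rewrite -Hd big_distrr /=.
apply/eqP; rewrite -(eqn_add2r (\sum_(i < l) r_ i * (n_ i - r_ i))) subnK; last first.
  by apply: leq_sum => i _; apply: leq_mul.
by rewrite -big_split /=; apply/eqP/eq_bigr => i _; rewrite -mulnDl subnK.
Qed.

Theorem proposition10 (q m n rho : nat) (F : finFieldType) (L : fieldExtType F)
  (hq : #|F| = q) (hm : \dim (fullv : {vspace L}) = m) :
  forall (l : nat) (n_ rho_ : 'I_l -> nat),
    0 < l <= n ->
    (forall i, 0 < n_ i <= n) ->
    (forall i, rho_ i <= n_ i) ->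
    (forall i, n_ i + rho_ i <= m) ->
    \sum_(i < l) n_ i = n ->
    \sum_(i < l) rho_ i = rho ->
    KR L n rho <= q ^ (m * (n - rho) - \sum_(i < l) rho_ i * (n_ i - rho_ i)).
Proof.
move=> l n_ r_ _ _ hr hnm hn hrho.
subst q m.
have [C [cardC covC]] := multi_code hr hnm (esym hn).
rewrite /KR.
apply: leq_trans (bigmin_leq _ _ (t0 := C) _) _.
  apply/forallP => x; have [c cC dc] := covC x; apply/existsP; exists c.
  by rewrite cC /dR (leq_trans (rk_spf _)) // -hrho.
apply: leq_trans cardC _.
rewrite leq_exp2l ?finNzRing_gt1 //.
subst n rho.
rewrite expo_eq //.
by move=> i; apply: leq_trans (leq_addl _ _) (hnm i).
Qed.
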